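(* Let $N=\{1,\ldots,n\}$, $\mathcal{X}=\{-1,1\}^n$, and let $P\subseteq\Delta(\mathcal{X})$ be a closed convex set with set of extreme points $\mathrm{ext}(P)$. Then: (1) A deterministic voting rule $\phi$ is $P$-robust if and only if there exists a nonzero $w\in\mathbb{R}_+^n$ such that $\dfrac{\sum_i w_ir_i(\phi,p)}{\sum_iw_i}>\dfrac12$ for all $p\in\mathrm{ext}(P)$. (2) A deterministic voting rule $\phi$ is weakly $P$-robust if and only if there exists a nonzero $w\in\mathbb{R}_+^n$ such that $\dfrac{\sum_i w_ir_i(\phi,p)}{\sum_iw_i}\geq\dfrac12$ for all $p\in\mathrm{ext}(P)$.
   Context: A deterministic voting rule is a map $\phi:\mathcal{X}\to\{-1,1\}$; $\Delta(\mathcal{X})$ is the simplex of probability distributions on $\mathcal{X}$. Responsiveness: $r_i(\phi,p)=p(\{x:\phi(x)=x_i\})$. $\phi$ is $P$-robust if for every $p\in P$ some $i\in N$ has $r_i(\phi,p)>1/2$; weakly $P$-robust if for every $p\in P$ some $i\in N$ has $r_i(\phi,p)\geq1/2$. *)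

(* Defs.v *)
From mathcomp Require Import all_boot all_order all_algebra.
From mathcomp Require Import all_classical all_reals all_analysis.
Set Implicit Arguments. Unset Strict Implicit. Unset Printing Implicit Defensive.
Import Order.TTheory GRing.Theory Num.Theory.
Import numFieldNormedType.Exports.
Local Open Scope ring_scope.
Local Open Scope classical_set_scope.

(* Votes/outcomes in {-1,1} are encoded by bool: true = 1, false = -1. *)
Definition profile (n : nat) : finType := {ffun 'I_n -> bool}.

Definition voting_rule (n : nat) := profile n -> bool.

(* Real-valued functions on X, with the (pointwise = Euclidean) product
   topology; distributions are elements of the simplex. *)
Notation fspace R n := {ptws profile n -> R}.

Definition in_simplex (R : realType) (n : nat) (p : fspace R n) : Prop :=
  (forall x, 0 <= p x) /\ \sum_(x : profile n) p x = 1.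

Definition resp (R : realType) (n : nat) (phi : voting_rule n) (p : fspace R n)
  (i : 'I_n) : R := \sum_(x : profile n | phi x == x i) p x.

Definition robust (R : realType) (n : nat) (P : set (fspace R n))
  (phi : voting_rule n) : Prop :=
  forall p, P p -> exists i, 1 / 2 < resp phi p i.

Definition weakly_robust (R : realType) (n : nat) (P : set (fspace R n))
  (phi : voting_rule n) : Prop :=
  forall p, P p -> exists i, 1 / 2 <= resp phi p i.

Definition convex_set (R : realType) (n : nat) (P : set (fspace R n)) : Prop :=
  forall p q (t : R), P p -> P q -> 0 <= t <= 1 ->
    P ((fun x => t * p x + (1 - t) * q x) : fspace R n).

Definition extreme_point (R : realType) (n : nat) (P : set (fspace R n))
  (p : fspace R n) : Prop :=
  P p /\ forall q r (t : R), P q -> P r -> 0 < t < 1 ->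
    p = ((fun x => t * q x + (1 - t) * r x) : fspace R n) -> q = r.

(* Main.v *)
Require Import Defs.
From mathcomp Require Import all_boot all_order all_algebra.
From mathcomp Require Import all_classical all_reals all_analysis.
From mathcomp Require Import ring lra.
Import Order.TTheory GRing.Theory Num.Theory.
Import numFieldNormedType.Exports.
Local Open Scope ring_scope.
Local Open Scope classical_set_scope.
Set Implicit Arguments. Unset Strict Implicit.

Lemma cont_sum (R : realType) (T : topologicalType) (I : Type) (s : seq I)
  (Pr : pred I) (f : I -> T -> R) :
  (forall i, continuous (f i)) ->
  continuous (fun p => \sum_(i <- s | Pr i) f i p).
Proof.
move=> fc; elim: s => [|a s IH].
  under eq_fun do rewrite big_nil; exact: cst_continuous.
case Ha: (Pr a).
  have -> : (fun p => \sum_(i <- a :: s | Pr i) f i p) =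
     (f a + (fun p => \sum_(i <- s | Pr i) f i p)).
    by apply: funext => p; rewrite big_cons Ha.
  by move=> x; apply: continuousD; [exact: fc|exact: IH].
have -> : (fun p => \sum_(i <- a :: s | Pr i) f i p) =
     (fun p => \sum_(i <- s | Pr i) f i p).
  by apply: funext => p; rewrite big_cons Ha.
exact: IH.
Qed.

Lemma cont_eval (R : realType) (U : eqType) (x : U) :
  continuous (fun p : {ptws U -> R} => p x).
Proof. exact: (@proj_continuous _ (fun _ : U => R) x). Qed.

Lemma cont_lin (R : realType) (U : finType) (c : U -> R) :
  continuous (fun p : {ptws U -> R} => \sum_x c x * p x).
Proof.
apply: cont_sum => x y.
apply: (@continuousM _ _ (fun _ => c x) (fun p : {ptws U -> R} => p x)).
  exact: cst_continuous.
exact: cont_eval.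
Qed.

Lemma cont_resp (R : realType) n (phi : voting_rule n) i :
  continuous (fun p : fspace R n => resp phi p i).
Proof.
rewrite /resp; apply: cont_sum => x; exact: cont_eval.
Qed.

Lemma simplex_le1 (R : realType) n (p : fspace R n) x :
  in_simplex p -> 0 <= p x <= 1.
Proof.
case=> p0 p1; rewrite p0 /=; rewrite -p1 (bigD1 x) //= lerDl.
by apply: sumr_ge0 => y _; apply: p0.
Qed.

Lemma P_compact (R : realType) n (P : set (fspace R n)) :
  (forall p, P p -> in_simplex p) -> closed P -> compact P.
Proof.
move=> Ps Pc.
set B := [set f : fspace R n | forall x, `[0, 1]%classic (f x)].
have C : compact B.
  exact: (@tychonoff (profile n) (fun _ => R) (fun _ => `[0, 1]%classic) (fun _ => @segment_compact R 0 1)).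
apply: (subclosed_compact Pc C).
move=> p /Ps sp x /=; rewrite in_itv /=; exact: simplex_le1.
Qed.

Lemma exists_min (R : realType) n (P : set (fspace R n)) :
  (forall p, P p -> in_simplex p) -> closed P ->
  forall (g : fspace R n -> R), continuous g -> P !=set0 ->
  exists2 c, P c & forall q, P q -> g c <= g q.
Proof.
move=> Ps Pc g gc P0.
have [c /set_mem Pc' cmin] := compact_EVT_min P0 (P_compact Ps Pc) (continuous_subspaceT gc).
by exists c => // q Pq; apply: cmin; apply: mem_set.
Qed.

Lemma cont_norm (R : realType) n :
  continuous (fun q : fspace R n => \sum_x q x * q x).
Proof.
apply: cont_sum => x y.
apply: (@continuousM _ _ (fun q : fspace R n => q x) (fun q : fspace R n => q x));
  exact: cont_eval.
Qed.

Lemma ext_min (R : realType) n (P : set (fspace R n)) :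
  (forall p, P p -> in_simplex p) -> closed P ->
  forall (g : fspace R n -> R), continuous g ->
  (forall q r (t : R), g ((fun x => t * q x + (1 - t) * r x) : fspace R n)
     = t * g q + (1 - t) * g r) ->
  forall p, P p -> exists e, extreme_point P e /\ g e <= g p.
Proof.
move=> Ps Pc g gc glin p Pp.
have [c Pc' cmin] := exists_min Ps Pc gc (ex_intro _ p Pp).
set F := P `&` [set q | g q = g c].
have Fc : compact F.
  refine (subclosed_compact _ (P_compact Ps Pc) _); last by move=> q [].
  apply: closedI => //; apply: (@preimage_closed _ _ g [set y | y = g c]); last exact: closed_eq.
  by move=> y _; exact: gc.
have F0 : F !=set0 by exists c.
have [e /set_mem [Pe ge] emax] :=
  compact_EVT_max F0 Fc (continuous_subspaceT (@cont_norm R n)).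
exists e; split; last by rewrite ge; exact: cmin.
split => // a b t Pa Pb /andP[t0 t1] eE.
have gae : g e = t * g a + (1 - t) * g b by rewrite eE glin.
have ha := cmin _ Pa; have hb := cmin _ Pb.
have h1 : 0 <= t * (g a - g c).
  by apply: mulr_ge0; [exact: ltW | rewrite subr_ge0].
have h2 : 0 <= (1 - t) * (g b - g c).
  by apply: mulr_ge0; rewrite subr_ge0 // ltW.
have h3 : t * (g a - g c) + (1 - t) * (g b - g c) = 0.
  by rewrite -ge gae; ring.
have gac : g a = g c.
  have /eqP : t * (g a - g c) = 0 by lra.
  by rewrite mulf_eq0 (gt_eqF t0) /= subr_eq0 => /eqP.
have gbc : g b = g c.
  have /eqP : (1 - t) * (g b - g c) = 0 by lra.
  by rewrite mulf_eq0 subr_eq0 (gt_eqF t1) /= subr_eq0 => /eqP.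
have Na := emax a (mem_set (conj Pa gac)).
have Nb := emax b (mem_set (conj Pb gbc)).
have iden : \sum_x t * (1 - t) * ((a x - b x) * (a x - b x)) =
  t * (\sum_x a x * a x) + (1 - t) * (\sum_x b x * b x) - \sum_x e x * e x.
  rewrite eE /= !mulr_sumr -big_split /= -sumrB; apply: eq_bigr => x _; ring.
have S0 : 0 <= \sum_x ((a x - b x) * (a x - b x)).
  by apply: sumr_ge0 => x _; rewrite -expr2 sqr_ge0.
have S1 : \sum_x ((a x - b x) * (a x - b x)) = 0.
  move: iden; rewrite -mulr_sumr => iden.
  have tt0 : 0 < t * (1 - t) by rewrite mulr_gt0 // subr_gt0.
  nra.
have nn : forall y : profile n, true -> 0 <= (a y - b y) * (a y - b y).
  by move=> y _; rewrite -expr2 sqr_ge0.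
apply: funext => x; have /eqP := psumr_eq0P nn S1 (i:=x) isT.
by rewrite mulf_eq0 orbb subr_eq0 => /eqP.
Qed.

Lemma resp_lin (R : realType) n (phi : voting_rule n) (q r : fspace R n) (t : R) i :
  resp phi ((fun x => t * q x + (1 - t) * r x) : fspace R n) i
  = t * resp phi q i + (1 - t) * resp phi r i.
Proof. by rewrite /resp big_split /= -!mulr_sumr. Qed.

Lemma maxsq (R : realType) (a e : R) :
  Num.max (a + e) 0 * Num.max (a + e) 0 <=
  Num.max a 0 * Num.max a 0 + 2 * Num.max a 0 * e + e * e.
Proof.
rewrite !maxEle.
have [ha|ha] := leP a 0; have [hb|hb] := leP (a + e) 0; nra.
Qed.

Lemma maxv (R : realType) (a : R) : Num.max a 0 * a = Num.max a 0 * Num.max a 0.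
Proof.
by rewrite !maxEle; have [ha|ha] := leP a 0; rewrite ?mul0r.
Qed.

Lemma neg_quad (R : realType) (S D : R) : S < 0 -> 0 <= D ->
  exists t, 0 < t <= 1 /\ 2 * t * S + t * t * D < 0.
Proof.
move=> S0 D0.
have DS : 0 < D - S by lra.
exists (- S / (D - S)); set t := - S / (D - S).
have e0 : t * (D - S) = - S by rewrite /t divfK // gt_eqF.
have t0 : 0 < t by rewrite /t divr_gt0 // oppr_gt0.
split.
  by rewrite t0 /= /t ler_pdivrMr // mul1r; lra.
have e1 : t * D = - S + t * S by lra.
have e2 : t * t * D = t * (- S + t * S) by rewrite -e1 mulrA.
have p : 0 < t * (- S) * (1 + t).
  by apply: mulr_gt0; [apply: mulr_gt0 => //; rewrite oppr_gt0 | lra].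
rewrite e2; lra.
Qed.

Lemma cont_h (R : realType) n (phi : voting_rule n) (c : R) :
  continuous (fun p : fspace R n =>
    \sum_i Num.max (resp phi p i - c) 0 * Num.max (resp phi p i - c) 0).
Proof.
apply: cont_sum => i.
have m : continuous (fun p : fspace R n => Num.max (resp phi p i - c) 0).
  move=> p; apply: (@continuous_max _ _ (fun p => resp phi p i - c) (fun _ => 0)).
    apply: (@continuousD _ _ _ (fun p => resp phi p i) (fun _ => - c)).
      exact: cont_resp.
    exact: cst_continuous.
  exact: cst_continuous.
move=> p; exact: (continuousM (m p) (m p)).
Qed.

Lemma conv_my (R : realType) n (P : set (fspace R n)) : convex_set P ->
  forall (p q : fspace R n) (t : R), P p -> P q -> 0 <= t <= 1 ->
  P ((fun x => t * p x + (1 - t) * q x) : fspace R n).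
Proof.
move=> Pcv p q t Pp Pq /andP[t0 t1].
have /set_mem := Pcv p q (Itv01 t0 t1) (mem_set Pp) (mem_set Pq).
congr P; apply: funext => x /=.
Qed.

Lemma sep (R : realType) n (n_gt0 : (0 < n)%N) (P : set (fspace R n)) :
  (forall p, P p -> in_simplex p) -> closed P -> convex_set P ->
  forall (phi : voting_rule n) (c : R),
  (forall p, P p -> exists i, c < resp phi p i) ->
  exists w : 'I_n -> R, (forall i, 0 <= w i) /\ \sum_i w i = 1 /\
    forall q, P q -> c < \sum_i w i * resp phi q i.
Proof.
move=> Ps Pc Pcv phi c H.
have [P0|P0] := pselect (P !=set0); last first.
  exists (fun _ => n%:R^-1); split; first by move=> i; rewrite invr_ge0 ler0n.
  split; last by move=> q Pq; exfalso; apply: P0; exists q.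
  rewrite sumr_const card_ord -[_^-1 *+ n]mulr_natr mulVf //.
  by rewrite pnatr_eq0 -lt0n.
have [ps Pps hmin] := exists_min Ps Pc (@cont_h R n phi c) P0.
pose u i := Num.max (resp phi ps i - c) 0.
have u0 : forall i, 0 <= u i by move=> i; rewrite /u le_max lexx orbT.
have [j hj] := H _ Pps.
have uj : 0 < u j by rewrite /u lt_max subr_gt0 hj.
pose d q i := resp phi q i - resp phi ps i.
have key : forall q, P q -> 0 <= \sum_i u i * d q i.
  move=> q Pq.
  set S := \sum_i _.
  set D := \sum_i d q i * d q i.
  have D0 : 0 <= D by apply: sumr_ge0 => i _; rewrite -expr2 sqr_ge0.
  have ineq : forall t, 0 < t <= 1 -> 0 <= 2 * t * S + t * t * D.
    move=> t /andP[t0 t1].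
    have t01 : 0 <= t <= 1 by rewrite ltW.
    have Pt := conv_my Pcv Pq Pps t01.
    have /= hle := hmin _ Pt.
    have hup : \sum_i Num.max (resp phi ((fun x => t * q x + (1 - t) * ps x) : fspace R n) i - c) 0
                 * Num.max (resp phi ((fun x => t * q x + (1 - t) * ps x) : fspace R n) i - c) 0
       <= \sum_i (u i * u i + 2 * u i * (t * d q i) + (t * d q i) * (t * d q i)).
      apply: ler_sum => i _; rewrite resp_lin.
      have -> : t * resp phi q i + (1 - t) * resp phi ps i - c
          = (resp phi ps i - c) + t * d q i by rewrite /d; ring.
      exact: maxsq.
    have hsum : \sum_i (u i * u i + 2 * u i * (t * d q i) + (t * d q i) * (t * d q i))
       = \sum_i u i * u i + 2 * t * S + t * t * D.
      rewrite !big_split /= /S /D !mulr_sumr; congr (_ + _ + _);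
        apply: eq_bigr => i _; ring.
    have hps : \sum_i Num.max (resp phi ps i - c) 0 * Num.max (resp phi ps i - c) 0
       = \sum_i u i * u i by [].
    lra.
  rewrite leNgt; apply/negP => S0.
  have [t [tI neg]] := neg_quad S0 D0.
  have := ineq t tI; lra.
set s := \sum_i u i.
have s0 : 0 < s.
  apply: (lt_le_trans uj); rewrite /s (bigD1 j) //= lerDl.
  by apply: sumr_ge0 => i _; exact: u0.
exists (fun i => u i / s); split; first by move=> i; rewrite divr_ge0 // ltW.
split; first by rewrite -mulr_suml divff // gt_eqF.
move=> q Pq.
have -> : \sum_i u i / s * resp phi q i = (\sum_i u i * resp phi q i) / s.
  by rewrite mulr_suml; apply: eq_bigr => i _; rewrite mulrAC.
rewrite ltr_pdivlMr //.
have e : \sum_i u i * resp phi q i - c * s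
    = \sum_i u i * d q i + \sum_i u i * u i.
  rewrite /s mulr_sumr -sumrB -big_split /=; apply: eq_bigr => i _.
  rewrite /d /u -maxv; ring.
have uu : 0 < \sum_i u i * u i.
  apply: (@lt_le_trans _ _ (u j * u j)); first by rewrite mulr_gt0.
  rewrite (bigD1 j) //= lerDl.
  by apply: sumr_ge0 => i _; rewrite mulr_ge0.
have := key q Pq; rewrite mulrC; lra.
Qed.

Lemma cluster_ge (T : topologicalType) (R : realType) (u : nat -> T) (c : T)
  (G : T -> R) (a : R) :
  cluster (u @ \oo) c -> continuous G ->
  (forall k, a - k.+1%:R^-1 <= G (u k)) -> a <= G c.
Proof.
move=> cl Gc Hk; rewrite leNgt; apply/negP => Gca.
pose d := (a - G c) / 2.
have d2 : d * 2 = a - G c by rewrite /d divfK // pnatr_eq0.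
have d0 : 0 < d by lra.
have [K HK] : exists k : nat, a - d + k.+1%:R^-1 < a by apply: ltr_add_invr; lra.
have nb : \forall t \near c, G t < a - d.
  by apply: (cvgr_lt (G c) (Gc c)); lra.
have Ainf : (u @ \oo) (u @` [set k | (K <= k)%N]).
  by apply: (filterS _ (nbhs_infty_ge K)) => k Kk /=; exists k.
have [_ [[k Kk <-] Gk]] := cl _ _ Ainf nb.
have := Hk k.
have : k.+1%:R^-1 <= K.+1%:R^-1 :> R.
  by rewrite lef_pV2 ?posrE ?ltr0Sn // ler_nat ltnS.
move: Gk HK; rewrite /=; move: (k.+1%:R^-1) (K.+1%:R^-1) => x y; clearbody d; lra.
Qed.

Lemma cont_wsum (R : realType) (m : nat) (a : 'I_m -> R) :
  continuous (fun w : {ptws 'I_m -> R} => \sum_i w i * a i).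
Proof.
apply: cont_sum => i y.
apply: (@continuousM _ _ (fun w : {ptws 'I_m -> R} => w i) (fun _ => a i)).
  exact: cont_eval.
exact: cst_continuous.
Qed.

Lemma cont_g (R : realType) n (phi : voting_rule n) (w : 'I_n -> R) :
  continuous (fun q : fspace R n => \sum_i w i * resp phi q i).
Proof.
apply: cont_sum => i y.
apply: (@continuousM _ _ (fun _ => w i) (fun q : fspace R n => resp phi q i)).
  exact: cst_continuous.
exact: cont_resp.
Qed.

Lemma sum_pos (R : realType) m (w : 'I_m -> R) :
  (forall i, 0 <= w i) -> forall j, 0 < w j -> 0 < \sum_i w i.
Proof.
move=> w0 j wj; apply: (lt_le_trans wj); rewrite (bigD1 j) //= lerDl.
by apply: sumr_ge0 => i _; exact: w0.
Qed.

Lemma nz_of_sum1 (R : realType) m (w : 'I_m -> R) :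
  \sum_i w i = 1 -> exists i, w i != 0.
Proof.
move=> s1; case: (pselect (exists i, w i != 0)) => // Hn; exfalso.
have : \sum_i w i = 0.
  apply: big1 => i _; case: (eqVneq (w i) 0) => // hi; exfalso; apply: Hn.
  by exists i.
by rewrite s1 => /eqP; rewrite oner_eq0.
Qed.

Unset Implicit Arguments.

Theorem corollary4 (R : realType) (n : nat) (n_gt0 : (0 < n)%N)
  (P : set (fspace R n))
  (P_simplex : forall p, P p -> in_simplex p)
  (P_closed : closed P) (P_convex : convex_set P) (phi : voting_rule n) :
  (robust P phi <->
     exists w : 'I_n -> R, (forall i, 0 <= w i) /\ (exists i, w i != 0) /\
       forall p, extreme_point P p ->
         1 / 2 < (\sum_i w i * resp phi p i) / (\sum_i w i)) /\
  (weakly_robust P phi <->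
     exists w : 'I_n -> R, (forall i, 0 <= w i) /\ (exists i, w i != 0) /\
       forall p, extreme_point P p ->
         1 / 2 <= (\sum_i w i * resp phi p i) / (\sum_i w i)).
Proof.
have glin : forall (w : 'I_n -> R) (q r : fspace R n) (t : R),
    \sum_i w i * resp phi ((fun x => t * q x + (1 - t) * r x) : fspace R n) i
    = t * (\sum_i w i * resp phi q i) + (1 - t) * (\sum_i w i * resp phi r i).
  move=> w q r t; rewrite !mulr_sumr -big_split /=; apply: eq_bigr => i _.
  rewrite resp_lin; ring.
have wpos : forall w : 'I_n -> R, (forall i, 0 <= w i) -> (exists i, w i != 0) ->
    exists2 j, 0 < w j & 0 < \sum_i w i.
  move=> w w0 [j wj]; have wj0 : 0 < w j by rewrite lt_neqAle eq_sym wj w0.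
  by exists j => //; exact: sum_pos wj0.
split; split.
- move=> rob.
  have [w [w0 [s1 H]]] := sep n_gt0 P_simplex P_closed P_convex rob.
  exists w; split => //; split; first exact: nz_of_sum1.
  by move=> p [Pp _]; rewrite s1 divr1; exact: H.
- move=> [w [w0 [wnz H]]] p Pp.
  have [j wj s0] := wpos w w0 wnz.
  have [e [ext ge]] := ext_min P_simplex P_closed (@cont_g R n phi w) (glin w) Pp.
  have := H e ext; rewrite ltr_pdivlMr // => He.
  case: (pselect (exists i, 1 / 2 < resp phi p i)) => // Hn; exfalso.
  have : \sum_i w i * resp phi p i <= 1 / 2 * \sum_i w i.
    rewrite mulr_sumr; apply: ler_sum => i _; rewrite [1 / 2 * _]mulrC.
    apply: (ler_wpM2l (w0 i)); rewrite leNgt; apply/negP => h; apply: Hn.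
    by exists i.
  move: He ge; lra.
- move=> wrob.
  have hk : forall k : nat, exists w : 'I_n -> R,
      (forall i, 0 <= w i) /\ \sum_i w i = 1 /\
      forall q, P q -> 1 / 2 - k.+1%:R^-1 < \sum_i w i * resp phi q i.
    move=> k; apply: (sep n_gt0 P_simplex P_closed P_convex).
    move=> p Pp; have [i hi] := wrob p Pp; exists i.
    have : 0 < k.+1%:R^-1 :> R by rewrite invr_gt0 ltr0Sn.
    move: hi; move: (k.+1%:R^-1) => x; lra.
  have [u hu] := choice hk.
  pose v k : {ptws 'I_n -> R} := u k.
  set B := [set f : {ptws 'I_n -> R} | forall i, `[0, 1]%classic (f i)].
  have Bc : compact B.
    exact: (@tychonoff 'I_n (fun _ => R) (fun _ => `[0, 1]%classic)
             (fun _ => @segment_compact R 0 1)).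
  have FB : (v @ \oo) B.
    apply: (filterS _ (nbhs_infty_ge 0)) => k _ i /=; rewrite in_itv /=.
    have [u0 [u1 _]] := hu k.
    rewrite u0 /= -u1 (bigD1 i) //= lerDl.
    by apply: sumr_ge0 => l _; exact: u0.
  have [c [Bcc clc]] := Bc _ (fmap_proper_filter v _) FB.
  have c0 : forall i, 0 <= c i.
    by move=> i; have := Bcc i; rewrite /= in_itv /= => /andP[].
  have sc1 : 1 <= \sum_i c i * 1.
    apply: (cluster_ge clc (@cont_wsum R n (fun _ => 1))) => k.
    have [_ [u1 _]] := hu k; rewrite /v.
    under eq_bigr do rewrite mulr1.
    rewrite u1 lerBlDr lerDl invr_ge0 ler0n //.
  have sc2 : -1 <= - \sum_i c i * 1.
    apply: (cluster_ge clc (G := fun w : {ptws 'I_n -> R} => - \sum_i w i * 1)).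
      by move=> w; apply: continuousN; exact: (@cont_wsum R n (fun _ => 1)).
    move=> k; have [_ [u1 _]] := hu k; rewrite /v.
    under eq_bigr do rewrite mulr1.
    rewrite u1 lerBlDr lerDl invr_ge0 ler0n //.
  have s1 : \sum_i c i = 1.
    move: sc1 sc2; under eq_bigr do rewrite mulr1; lra.
  exists c; split => //; split; first exact: nz_of_sum1.
  move=> p [Pp _]; rewrite s1 divr1.
  apply: (cluster_ge clc (@cont_wsum R n (fun i => resp phi p i))) => k.
  have [_ [_ H]] := hu k; exact: ltW (H p Pp).
- move=> [w [w0 [wnz H]]] p Pp.
  have [j wj s0] := wpos w w0 wnz.
  have [e [ext ge]] := ext_min P_simplex P_closed (@cont_g R n phi w) (glin w) Pp.
  have := H e ext; rewrite ler_pdivlMr // => He.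
  case: (pselect (exists i, 1 / 2 <= resp phi p i)) => // Hn; exfalso.
  have lt : forall i, resp phi p i < 1 / 2.
    by move=> i; rewrite ltNge; apply/negP => h; apply: Hn; exists i.
  have : \sum_i w i * resp phi p i < 1 / 2 * \sum_i w i.
    rewrite mulr_sumr (bigD1 j) //= [X in _ < X](bigD1 j) //=.
    apply: ltr_leD.
      by rewrite [1 / 2 * _]mulrC ltr_pM2l.
    apply: ler_sum => i _; rewrite [1 / 2 * _]mulrC.
    exact: (ler_wpM2l (w0 i) (ltW (lt i))).
  move: He ge; lra.
Qed.
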